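(* Let $m_x,m_y,m_z\in(0,1)$, $\alpha\in(0,1)$, $c>0$ and $\mu>0$, and let $\rho:[0,\infty)\to[0,1]$ be a decreasing function with $\rho(0)=1$ and $\lim_{w\to\infty}\rho(w)=0$. Consider the discrete-time system on the state space $\{(x,y,z): x\ge 0,\ y\ge 0,\ z>0\}$ $$\begin{aligned} x(t+1)&=(1-m_x)x(t)+\alpha c\,\rho(c\,x(t))\,\frac{y(t)}{y(t)+z(t)}\,x(t),\\ y(t+1)&=(1-m_y)y(t)+(1-\alpha)c\,\rho(c\,x(t))\,\frac{y(t)}{y(t)+z(t)}\,x(t)+c\,\rho(c\,x(t))\,\frac{z(t)}{y(t)+z(t)}\,x(t),\\ z(t+1)&=(1-m_z)z(t)+\mu . \end{aligned}$$ Then the extinction equilibrium $\left(0,0,\dfrac{\mu}{m_z}\right)$ is locally asymptotically stable: it is Lyapunov stable, and there is a neighborhood $U$ of it in the state space such that every trajectory starting in $U$ converges to $\left(0,0,\dfrac{\mu}{m_z}\right)$ as $t\to\infty$.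
   Context: The variables $x,y,z$ are the numbers of adult females, adult males and ''supermales'' (YY males, whose offspring are all male) of an invasive fish population; $t$ counts life cycles. The mortality rates are $m_i=1-p_iq_i$ with survival probabilities $p_i,q_i\in(0,1)$ in the two life stages, $c$ is the fecundity, $\alpha$ is the fraction of surviving juveniles becoming female, $\rho$ is the density-dependent juvenile survival probability, and $\mu$ is the number of supermales released per life cycle. *)

(* Defs.v *)
From Stdlib Require Import Reals.
Open Scope R_scope.

Definition step (mx my mz alpha c mu : R) (rho : R -> R) (s : R * R * R)
  : R * R * R :=
  let '(x, y, z) := s in
  ( (1 - mx) * x + alpha * c * rho (c * x) * (y / (y + z)) * x,
    (1 - my) * y + (1 - alpha) * c * rho (c * x) * (y / (y + z)) * x
      + c * rho (c * x) * (z / (y + z)) * x,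
    (1 - mz) * z + mu ).

Fixpoint traj (mx my mz alpha c mu : R) (rho : R -> R) (s0 : R * R * R)
  (t : nat) : R * R * R :=
  match t with
  | O => s0
  | S t' => step mx my mz alpha c mu rho (traj mx my mz alpha c mu rho s0 t')
  end.

Definition in_state_space (s : R * R * R) : Prop :=
  let '(x, y, z) := s in 0 <= x /\ 0 <= y /\ 0 < z.

Definition dist3 (s u : R * R * R) : R :=
  let '(x, y, z) := s in
  let '(a, b, d) := u in
  Rmax (Rabs (x - a)) (Rmax (Rabs (y - b)) (Rabs (z - d))).

Definition converges3 (u : nat -> R * R * R) (e : R * R * R) : Prop :=
  forall eps, 0 < eps -> exists N : nat, forall t, (N <= t)%nat -> dist3 (u t) e < eps.

(* Main.v *)
Require Import Defs.
From Stdlib Require Import Reals Lra Lia Psatz.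
Open Scope R_scope.

Lemma step_inv (mx my mz alpha c mu : R) (rho : R -> R) zs K B q x y z :
  0 < mx < 1 -> 0 < my < 1 -> 0 < mz < 1 -> 0 < alpha < 1 ->
  0 < c -> 
  (forall w, 0 <= w -> 0 <= rho w <= 1) ->
  0 < zs -> mu = mz * zs -> 1 <= K -> c <= K * mx / 4 ->
  4 * alpha * c * B = mx * zs -> 1 - my <= q -> 1 - mx/4 <= q ->
  0 <= x -> 0 <= y -> Rabs (z - zs) <= zs/2 -> y + K * x <= B ->
  let '(x', y', z') := step mx my mz alpha c mu rho (x, y, z) in
  0 <= x' /\ 0 <= y' /\ y' + K * x' <= q * (y + K * x) /\ z' - zs = (1 - mz) * (z - zs).
Proof.
  intros Hmx Hmy Hmz Hal Hc Hrho Hzs Hmu HK HKc HB Hq1 Hq2 Hx Hy Hz HV.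
  simpl.
  assert (Hz2 : zs / 2 <= z) by (unfold Rabs in Hz; destruct (Rcase_abs (z - zs)); lra).
  assert (Hr : 0 <= rho (c * x) <= 1) by (apply Hrho; nra).
  destruct Hr as [Hr0 Hr1].
  set (r := rho (c * x)) in *.
  assert (Hyz : 0 < y + z) by lra.
  set (f := y / (y + z)). set (g := z / (y + z)).
  assert (Hfg : f + g = 1) by (unfold f, g; field; lra).
  assert (Hf0 : 0 <= f) by (unfold f; apply Rmult_le_pos; [lra | left; apply Rinv_0_lt_compat; lra]).
  assert (Hg0 : 0 <= g) by (unfold g; apply Rmult_le_pos; [lra | left; apply Rinv_0_lt_compat; lra]).
  assert (Hfy : f * (y + z) = y) by (unfold f; field; lra).
  assert (HyB : y <= B) by nra.
  assert (Hf : alpha * c * f <= mx / 2).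
  { assert (f * (zs/2) <= y).
    { rewrite <- Hfy. apply Rmult_le_compat_l; lra. }
    assert (4 * alpha * c * (f * (zs / 2)) <= mx * zs).
    { rewrite <- HB. assert (0 < 4 * alpha * c) by nra.
      apply Rmult_le_compat_l; lra. }
    assert (zs * (alpha * c * f * 2) <= zs * mx) by lra.
    apply Rmult_le_reg_l in H1; lra. }
  assert (Hx' : alpha * c * r * f * x <= mx / 2 * x).
  { assert (alpha * c * f * r <= mx/2) by nra. nra. }
  assert (Hy' : (1 - alpha) * c * r * f * x + c * r * g * x <= c * x).
  { assert (0 <= alpha * f) by (apply Rmult_le_pos; lra).
    assert ((1 - alpha) * f + g <= 1) by lra.
    assert (0 <= (1 - alpha) * f) by (apply Rmult_le_pos; lra).
    assert (r * ((1 - alpha) * f + g) <= 1 * 1) by (apply Rmult_le_compat; lra).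
    assert (c * (r * ((1 - alpha) * f + g)) * x <= c * 1 * x).
    { apply Rmult_le_compat_r; [lra|]. apply Rmult_le_compat_l; lra. }
    lra. }
  repeat split.
    - assert (0 <= alpha * c * r * f * x).
    { repeat (apply Rmult_le_pos; [|lra]); lra. }
    nra.
  - assert (0 <= (1 - alpha) * c * r * f * x).
    { repeat (apply Rmult_le_pos; [|lra]); lra. }
    assert (0 <= c * r * g * x).
    { repeat (apply Rmult_le_pos; [|lra]); lra. }
    nra.
  - assert (0 <= (q - (1 - my)) * y) by (apply Rmult_le_pos; lra).
    assert (0 <= (q - (1 - mx/4)) * (K * x)) by (apply Rmult_le_pos; nra).
    assert (0 <= (K * mx / 4 - c) * x) by (apply Rmult_le_pos; lra).
    assert (K * (alpha * c * r * f * x) <= K * (mx / 2 * x)) by (apply Rmult_le_compat_l; lra).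
    nra.
  - rewrite Hmu. ring.
Qed.

Lemma pow01 a n : 0 <= a <= 1 -> 0 <= a ^ n <= 1.
Proof.
  intros Ha. induction n as [|n IH]; simpl; [lra|]. split; [nra|].
  assert (a * a ^ n <= 1 * 1) by (apply Rmult_le_compat; lra). lra.
Qed.

Lemma traj_inv (mx my mz alpha c mu : R) (rho : R -> R) zs K B q x0 y0 z0 :
  0 < mx < 1 -> 0 < my < 1 -> 0 < mz < 1 -> 0 < alpha < 1 ->
  0 < c ->
  (forall w, 0 <= w -> 0 <= rho w <= 1) ->
  0 < zs -> mu = mz * zs -> 1 <= K -> c <= K * mx / 4 ->
  4 * alpha * c * B = mx * zs -> 1 - my <= q -> 1 - mx/4 <= q -> q <= 1 ->
  0 <= x0 -> 0 <= y0 -> Rabs (z0 - zs) <= zs/2 -> y0 + K * x0 <= B ->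
  forall t, let '(x, y, z) := traj mx my mz alpha c mu rho (x0, y0, z0) t in
  0 <= x /\ 0 <= y /\ y + K * x <= q ^ t * (y0 + K * x0) /\
  z - zs = (1 - mz) ^ t * (z0 - zs).
Proof.
  intros Hmx Hmy Hmz Hal Hc Hrho Hzs Hmu HK HKc HB Hq1 Hq2 Hq3 Hx Hy Hz HV t.
  induction t as [|t IH].
  - simpl. lra.
  - simpl. destruct (traj mx my mz alpha c mu rho (x0, y0, z0) t) as [[a b] d].
    destruct IH as (Ha & Hb & HV' & Hd).
    assert (Hp1 := pow01 q t ltac:(lra)).
    assert (Hp2 := pow01 (1 - mz) t ltac:(lra)).
    assert (HVab : b + K * a <= y0 + K * x0).
    { assert (q ^ t * (y0 + K * x0) <= 1 * (y0 + K * x0)).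
      { apply Rmult_le_compat_r; nra. }
      lra. }
    assert (Hdz : Rabs (d - zs) <= zs / 2).
    { rewrite Hd, Rabs_mult, (Rabs_pos_eq ((1 - mz) ^ t)) by lra.
      assert (0 <= Rabs (z0 - zs)) by apply Rabs_pos.
      assert ((1 - mz) ^ t * Rabs (z0 - zs) <= 1 * Rabs (z0 - zs)).
      { apply Rmult_le_compat_r; lra. }
      lra. }
    pose proof (step_inv mx my mz alpha c mu rho zs K B q a b d Hmx Hmy Hmz Hal Hc Hrho Hzs Hmu HK HKc HB Hq1 Hq2 Ha Hb Hdz ltac:(lra)) as Hs.
    destruct (step mx my mz alpha c mu rho (a, b, d)) as [[a' b'] d'].
    destruct Hs as (H1 & H2 & H3 & H4).
    repeat split; try lra.
    + assert (q * (b + K * a) <= q * (q ^ t * (y0 + K * x0))).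
      { apply Rmult_le_compat_l; lra. }
      lra.
    + rewrite H4, Hd. ring.
Qed.

Lemma dist_bound (mx my mz alpha c mu : R) (rho : R -> R) zs K B q x0 y0 z0 eps :
  0 < mx < 1 -> 0 < my < 1 -> 0 < mz < 1 -> 0 < alpha < 1 ->
  0 < c ->
  (forall w, 0 <= w -> 0 <= rho w <= 1) ->
  0 < zs -> mu = mz * zs -> 1 <= K -> c <= K * mx / 4 ->
  4 * alpha * c * B = mx * zs -> 1 - my <= q -> 1 - mx/4 <= q -> q <= 1 ->
  0 <= x0 -> 0 <= y0 -> Rabs (z0 - zs) <= zs/2 -> y0 + K * x0 <= B ->
  forall t, q ^ t * (y0 + K * x0) < eps -> (1 - mz) ^ t * Rabs (z0 - zs) < eps ->
  dist3 (traj mx my mz alpha c mu rho (x0, y0, z0) t) (0, 0, zs) < eps.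
Proof.
  intros Hmx Hmy Hmz Hal Hc Hrho Hzs Hmu HK HKc HB Hq1 Hq2 Hq3 Hx Hy Hz HV t H1 H2.
  pose proof (traj_inv mx my mz alpha c mu rho zs K B q x0 y0 z0 Hmx Hmy Hmz Hal Hc Hrho Hzs Hmu HK HKc HB Hq1 Hq2 Hq3 Hx Hy Hz HV t) as Ht.
  destruct (traj mx my mz alpha c mu rho (x0, y0, z0) t) as [[a b] d].
  destruct Ht as (Ha & Hb & HV' & Hd).
  simpl.
  assert (Hp2 := pow01 (1 - mz) t ltac:(lra)).
  rewrite !Rminus_0_r, (Rabs_pos_eq a), (Rabs_pos_eq b) by lra.
  apply Rmax_lub_lt; [nra|].
  apply Rmax_lub_lt; [nra|].
  rewrite Hd, Rabs_mult, (Rabs_pos_eq ((1 - mz) ^ t)) by lra. lra.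
Qed.

Theorem mainTheorem2 (mx my mz alpha c mu : R) (rho : R -> R) :
  0 < mx < 1 -> 0 < my < 1 -> 0 < mz < 1 -> 0 < alpha < 1 ->
  0 < c -> 0 < mu ->
  (forall w, 0 <= w -> 0 <= rho w <= 1) ->
  (forall u v, 0 <= u -> u <= v -> rho v <= rho u) ->
  rho 0 = 1 ->
  (forall eps, 0 < eps -> exists W, forall w, W <= w -> Rabs (rho w) < eps) ->
  let e := (0, 0, mu / mz) in
  (* Lyapunov stability *)
  (forall eps, 0 < eps -> exists delta, 0 < delta /\
     forall s0, in_state_space s0 -> dist3 s0 e < delta ->
       forall t : nat, dist3 (traj mx my mz alpha c mu rho s0 t) e < eps) /\
  (* local attractivity *)
  (exists delta, 0 < delta /\
     forall s0, in_state_space s0 -> dist3 s0 e < delta ->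
       converges3 (traj mx my mz alpha c mu rho s0) e).
Proof.
  intros Hmx Hmy Hmz Hal Hc Hmu Hrho _ _ _ e.
  set (zs := mu / mz) in *.
  set (K := 1 + 4 * c / mx).
  set (B := mx * zs / (4 * alpha * c)).
  set (q := Rmax (1 - my) (1 - mx / 4)).
  assert (Hzs : 0 < zs) by (unfold zs; apply Rdiv_lt_0_compat; lra).
  assert (Hmu' : mu = mz * zs) by (unfold zs; field; lra).
  assert (HcK : 0 < 4 * c / mx) by (apply Rdiv_lt_0_compat; lra).
  assert (HK : 1 <= K) by (unfold K; lra).
  assert (HKc : c <= K * mx / 4) by (assert (K * mx / 4 = mx / 4 + c) by (unfold K; field; lra); lra).
  assert (HB : 4 * alpha * c * B = mx * zs) by (unfold B; field; nra).
  assert (HBp : 0 < B) by (unfold B; apply Rdiv_lt_0_compat; nra).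
  assert (Hq1 : 1 - my <= q) by apply Rmax_l.
  assert (Hq2 : 1 - mx / 4 <= q) by apply Rmax_r.
  assert (Hq3 : q < 1) by (apply Rmax_lub_lt; lra).
  set (D := fun eps => Rmin (zs / 2) (Rmin eps B / (2 * (1 + K)))).
  assert (HD : forall eps, 0 < eps -> 0 < D eps /\ D eps <= zs / 2 /\
             D eps * (1 + K) <= Rmin eps B / 2).
  { intros eps Heps. unfold D.
    assert (0 < Rmin eps B) by (apply Rmin_pos; lra).
    assert (0 < Rmin eps B / (2 * (1 + K))) by (apply Rdiv_lt_0_compat; lra).
    split; [apply Rmin_pos; lra|]. split; [apply Rmin_l|].
    assert (Rmin (zs / 2) (Rmin eps B / (2 * (1 + K))) <= Rmin eps B / (2 * (1 + K))) by apply Rmin_r.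
    assert (Rmin eps B / (2 * (1 + K)) * (1 + K) = Rmin eps B / 2) by (field; lra).
    nra. }
  assert (Hinit : forall eps, 0 < eps -> forall x0 y0 z0,
     in_state_space (x0, y0, z0) -> dist3 (x0, y0, z0) e < D eps ->
     0 <= x0 /\ 0 <= y0 /\ Rabs (z0 - zs) < D eps /\ y0 + K * x0 < Rmin eps B / 2).
  { intros eps Heps x0 y0 z0 [Hx [Hy Hz]] Hd.
    destruct (HD eps Heps) as (HD1 & HD2 & HD3).
    unfold dist3, e in Hd. rewrite !Rminus_0_r, (Rabs_pos_eq x0), (Rabs_pos_eq y0) in Hd by lra.
    assert (x0 < D eps) by (eapply Rle_lt_trans; [apply Rmax_l|exact Hd]).
    assert (Hr : Rmax y0 (Rabs (z0 - zs)) < D eps)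
      by (eapply Rle_lt_trans; [apply Rmax_r|exact Hd]).
    assert (y0 < D eps) by (eapply Rle_lt_trans; [apply Rmax_l|exact Hr]).
    assert (Rabs (z0 - zs) < D eps) by (eapply Rle_lt_trans; [apply Rmax_r|exact Hr]).
    repeat split; try lra. nra. }
  split.
  - intros eps Heps. exists (D eps). destruct (HD eps Heps) as (HD1 & HD2 & HD3).
    split; [lra|]. intros [[x0 y0] z0] Hs Hd t.
    destruct (Hinit eps Heps x0 y0 z0 Hs Hd) as (Hx & Hy & Hz & HV).
    assert (Rmin eps B <= eps) by apply Rmin_l.
    assert (Rmin eps B <= B) by apply Rmin_r.
    assert (Hp1 := pow01 q t ltac:(lra)).
    assert (Hp2 := pow01 (1 - mz) t ltac:(lra)).
    apply (dist_bound mx my mz alpha c mu rho zs K B q); try lra; [exact Hrho| |].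
    + assert (q ^ t * (y0 + K * x0) <= 1 * (y0 + K * x0)).
      { apply Rmult_le_compat_r; nra. }
      lra.
    + assert (0 <= Rabs (z0 - zs)) by apply Rabs_pos.
      assert ((1 - mz) ^ t * Rabs (z0 - zs) <= 1 * Rabs (z0 - zs)).
      { apply Rmult_le_compat_r; lra. }
      nra.
  - exists (D B). destruct (HD B HBp) as (HD1 & HD2 & HD3).
    split; [lra|]. intros [[x0 y0] z0] Hs Hd eps Heps.
    destruct (Hinit B HBp x0 y0 z0 Hs Hd) as (Hx & Hy & Hz & HV).
    assert (Rmin B B <= B) by apply Rmin_r.
    assert (0 <= Rabs (z0 - zs)) by apply Rabs_pos.
    destruct (pow_lt_1_zero q ltac:(rewrite Rabs_pos_eq; lra) (eps / (y0 + K * x0 + 1))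
      ltac:(apply Rdiv_lt_0_compat; nra)) as [N1 HN1].
    destruct (pow_lt_1_zero (1 - mz) ltac:(rewrite Rabs_pos_eq; lra) (eps / (Rabs (z0 - zs) + 1))
      ltac:(apply Rdiv_lt_0_compat; lra)) as [N2 HN2].
    exists (Nat.max N1 N2). intros t Ht.
    assert (Hp1 := pow01 q t ltac:(lra)).
    assert (Hp2 := pow01 (1 - mz) t ltac:(lra)).
    specialize (HN1 t ltac:(lia)). specialize (HN2 t ltac:(lia)).
    rewrite Rabs_pos_eq in HN1, HN2 by lra.
    apply (dist_bound mx my mz alpha c mu rho zs K B q); try lra; [exact Hrho| |].
    + assert (q ^ t * (y0 + K * x0 + 1) < eps / (y0 + K * x0 + 1) * (y0 + K * x0 + 1)).
      { apply Rmult_lt_compat_r; nra. }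
      replace (eps / (y0 + K * x0 + 1) * (y0 + K * x0 + 1)) with eps in H1 by (field; nra).
      nra.
    + assert ((1 - mz) ^ t * (Rabs (z0 - zs) + 1) < eps / (Rabs (z0 - zs) + 1) * (Rabs (z0 - zs) + 1)).
      { apply Rmult_lt_compat_r; lra. }
      replace (eps / (Rabs (z0 - zs) + 1) * (Rabs (z0 - zs) + 1)) with eps in H1 by (field; lra).
      nra.
Qed.
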